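(* Let $q$ be a prime power, $m\ge2$, and $\Phi(x)=\sum_{i=0}^{2m}c_ix^{q^i}\in\mathbb{F}_q[x]$ with $c_{2m}=1$, $c_i=-c_{2m-i}$ for $0\le i\le m$, and $c_m=0$. Then there is a monic polynomial $f\in\mathbb{F}_q[x]$ of degree $q^{m-1}(q^m+1)$ such that $f^q-f=x^{q^m}\Phi(x)$. This $f$ is unique if we require $f(0)=0$. The powers of $x$ occurring in $f$ with nonzero coefficient all have the form $x^{q^i+q^j}$ for non-negative integers $i,j$. *)

(* Defs.v *)
From HB Require Import structures.
From mathcomp Require Import all_boot all_order all_algebra all_field.
Set Implicit Arguments. Unset Strict Implicit. Unset Printing Implicit Defensive.
Import GRing.Theory.
Local Open Scope ring_scope.

Definition linPhi (F : finFieldType) (m : nat) (c : nat -> F) : {poly F} :=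
  \sum_(i < (2 * m).+1) c i *: 'X^(#|F| ^ i).

(* Main.v *)
Require Import Defs.
From HB Require Import structures.
From mathcomp Require Import all_boot all_order all_algebra all_fingroup all_solvable all_field.
From mathcomp Require Import zify ring.
Import GRing.Theory.
Local Open Scope ring_scope.

Section Frob.
Variable F : finFieldType.
Local Notation q := #|F|.

Lemma q_gt1 : (1 < q)%N. Proof. exact: finNzRing_gt1. Qed.

Lemma qnat : [pchar {poly F}].-nat q.
Proof.
have [p pr pc] := finPcharP F.
have := abelem_pgroup (fin_ring_pchar_abelem pc).
rewrite /pgroup cardsT => H.
rewrite (eq_pnat _ (@pchar_poly F)) (eq_pnat _ (pcharf_eq pc)) //.
Qed.

Lemma frobD (a b : {poly F}) : (a + b) ^+ q = a ^+ q + b ^+ q.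
Proof. exact: exprDn_pchar qnat. Qed.

Lemma frobN (a : {poly F}) : (- a) ^+ q = - a ^+ q.
Proof. exact: exprNn_pchar qnat. Qed.

Lemma frobZ (c : F) (a : {poly F}) : (c *: a) ^+ q = c *: a ^+ q.
Proof. by rewrite -!mul_polyC exprMn -polyC_exp expf_card. Qed.

Lemma frob0 : (0 : {poly F}) ^+ q = 0.
Proof. by rewrite expr0n; case: q q_gt1. Qed.

Lemma frob_sum (I : Type) (r : seq I) (P : pred I) (G : I -> {poly F}) :
  (\sum_(i <- r | P i) G i) ^+ q = \sum_(i <- r | P i) (G i) ^+ q.
Proof. exact: (big_morph (fun p : {poly F} => p ^+ q) frobD frob0). Qed.

Lemma frobXn k : ('X^k : {poly F}) ^+ q = 'X^(k * q).
Proof. by rewrite exprM. Qed.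

Lemma frob_ee a b : ('X^(q ^ a + q ^ b) : {poly F}) ^+ q = 'X^(q ^ a.+1 + q ^ b.+1).
Proof. by rewrite frobXn mulnDl -!expnSr. Qed.

Definition Supp (p : {poly F}) :=
  forall k : nat, p`_k != 0 -> exists i j : nat, k = (q ^ i + q ^ j)%N.

Lemma supp_sum (I : Type) (r : seq I) (P : pred I) (G : I -> {poly F}) :
  (forall i, P i -> Supp (G i)) -> Supp (\sum_(i <- r | P i) G i).
Proof.
move=> H; apply: (big_ind Supp) => //.
  by move=> k; rewrite coef0 eqxx.
move=> p1 p2 H1 H2 k; rewrite coefD.
case: (eqVneq p1`_k 0) => [->|nz _]; last exact: H1.
by rewrite add0r; apply: H2.
Qed.

Lemma supp_scale a p : Supp p -> Supp (a *: p).
Proof.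
move=> H k; rewrite coefZ; case: (eqVneq p`_k 0) => [->|nz _]; last exact: H.
by rewrite mulr0 eqxx.
Qed.

Lemma supp_X a b : Supp 'X^(q ^ a + q ^ b).
Proof.
move=> k; rewrite coefXn; case: (eqVneq k (q ^ a + q ^ b)%N) => [->|_]; first by exists a, b.
by rewrite eqxx.
Qed.

Lemma size_sum_le (I : Type) (r : seq I) (P : pred I) (G : I -> {poly F}) N :
  (forall i, P i -> (size (G i) <= N)%N) -> leq (size (\sum_(i <- r | P i) G i)) N.
Proof.
move=> H; apply: (big_ind (fun p : {poly F} => (size p <= N)%N)).
- by rewrite size_poly0.
- by move=> p1 p2 h1 h2; apply: leq_trans (size_polyD _ _) _; rewrite geq_max h1 h2.
- exact: H.
Qed.

End Frob.

Lemma sum_pair (V : zmodType) (m : nat) (G : nat -> V) : G m = 0 ->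
  \sum_(i < (2 * m).+1) G i = \sum_(i < m) (G i + G (2 * m - i)%N).
Proof.
move=> Gm.
rewrite big_split /= -(big_mkord xpredT G) -(big_mkord xpredT G) -(big_mkord xpredT (fun i => G (2 * m - i)%N)).
rewrite (@big_cat_nat _ _ _ m 0 (2 * m).+1) /=; [|lia|lia].
rewrite (@big_ltn _ _ _ m); last by lia.
rewrite Gm add0r; congr (_ + _).
rewrite [RHS]big_nat_rev /= add0n.
rewrite -{1}(add0n m.+1) big_addn.
have -> : ((2 * m).+1 - m.+1 = m)%N by lia.
apply: eq_big_nat => i /andP[_ lt_im]; congr G.
lia.
Qed.

Definition fpoly (F : finFieldType) (m : nat) (c : nat -> F) : {poly F} :=
  \sum_(i < m) c (2 * m - i)%N *:
     \sum_(t < m - i) 'X^(#|F| ^ (i + t) + #|F| ^ (m + t)).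

Arguments fpoly {F}.
Arguments Supp {F}.

Lemma frob_f (F : finFieldType) (m : nat) (c : nat -> F) :
  fpoly m c ^+ #|F| - fpoly m c =
  \sum_(i < m) c (2 * m - i)%N *:
     ('X^(#|F| ^ m + #|F| ^ (2 * m - i)) - 'X^(#|F| ^ i + #|F| ^ m)).
Proof.
rewrite /fpoly frob_sum -sumrB; apply: eq_bigr => i _.
rewrite frobZ frob_sum -scalerBr; congr (_ *: _).
rewrite -sumrB.
under eq_bigr do rewrite frob_ee -!addnS.
rewrite -(big_mkord xpredT (fun t => 'X^(#|F| ^ (i + t.+1) + #|F| ^ (m + t.+1)) -
   'X^(#|F| ^ (i + t) + #|F| ^ (m + t)))).
rewrite (telescope_sumr (fun t => 'X^(#|F| ^ (i + t) + #|F| ^ (m + t)) : {poly F})) //.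
have lt_im := ltn_ord i.
have -> : (i + (m - i) = m)%N by lia.
have -> : (m + (m - i) = 2 * m - i)%N by lia.
by rewrite !addn0.
Qed.

Lemma fpoly_split (F : finFieldType) (n : nat) (c : nat -> F) :
  c (2 * n.+1)%N = 1 ->
  fpoly n.+1 c = 'X^(#|F| ^ n + #|F| ^ (n.+1 + n)) +
   (\sum_(t < n) 'X^(#|F| ^ t + #|F| ^ (n.+1 + t)) +
    \sum_(i < n) c (2 * n.+1 - i.+1)%N *:
        \sum_(t < n.+1 - i.+1) 'X^(#|F| ^ (i.+1 + t) + #|F| ^ (n.+1 + t))).
Proof.
move=> htop.
rewrite /fpoly big_ord_recl /= subn0 htop scale1r big_ord_recr /=.
by rewrite [_ + 'X^_]addrC -addrA.
Qed.

Lemma fpoly_rest_size (F : finFieldType) (n : nat) (c : nat -> F) :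
  leq (size (\sum_(t < n) 'X^(#|F| ^ t + #|F| ^ (n.+1 + t)) +
    \sum_(i < n) c (2 * n.+1 - i.+1)%N *:
        \sum_(t < n.+1 - i.+1) ('X^(#|F| ^ (i.+1 + t) + #|F| ^ (n.+1 + t)) : {poly F})))
   (#|F| ^ n + #|F| ^ (n.+1 + n)).
Proof.
have q1 := q_gt1 F.
apply: leq_trans (size_polyD _ _) _; rewrite geq_max; apply/andP; split.
  apply: size_sum_le => t _; rewrite size_polyXn.
  have lt_tn := ltn_ord t.
  have h1 : (#|F| ^ t < #|F| ^ n)%N by rewrite ltn_exp2l.
  have h2 : (#|F| ^ (n.+1 + t) < #|F| ^ (n.+1 + n))%N by rewrite ltn_exp2l // ltn_add2l.
  lia.
apply: size_sum_le => i _; apply: leq_trans (size_scale_leq _ _) _.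
apply: size_sum_le => t _; rewrite size_polyXn.
have lt_in := ltn_ord i; have lt_t := ltn_ord t.
have h1 : (#|F| ^ (i.+1 + t) <= #|F| ^ n)%N by rewrite leq_exp2l //; lia.
have h2 : (#|F| ^ (n.+1 + t) < #|F| ^ (n.+1 + n))%N by rewrite ltn_exp2l //; lia.
lia.
Qed.
Theorem lemma4p5 (F : finFieldType) (m : nat) (c : nat -> F)
  (hm : (2 <= m)%N)
  (htop : c (2 * m)%N = 1)
  (hanti : forall i : nat, (i <= m)%N -> c i = - c (2 * m - i)%N)
  (hmid : c m = 0) :
  let q := #|F| in
  let Phi := linPhi m c in
  exists f : {poly F},
    [/\ f \is monic,
        size f = (q ^ m.-1 * (q ^ m + 1)).+1,
        f ^+ q - f = 'X^(q ^ m) * Phi,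
        f.[0] = 0 &
        forall k : nat, f`_k != 0 -> exists i j : nat, k = (q ^ i + q ^ j)%N]
    /\ (forall g : {poly F},
          g \is monic -> size g = (q ^ m.-1 * (q ^ m + 1)).+1 ->
          g ^+ q - g = 'X^(q ^ m) * Phi -> g.[0] = 0 -> g = f).
Proof.
move=> q Phi.
have q1 : (1 < q)%N := q_gt1 F.
have eqf : fpoly m c ^+ q - fpoly m c = 'X^(q ^ m) * Phi.
  rewrite frob_f /Phi /linPhi mulr_sumr.
  under [RHS]eq_bigr do rewrite -scalerAr -exprD.
  rewrite (@sum_pair _ m (fun i => c i *: 'X^(q ^ m + q ^ i))); last by rewrite hmid scale0r.
  apply: eq_bigr => i _.
  have lt_im := ltn_ord i.
  rewrite (hanti i (ltnW lt_im)) scalerBr scaleNr addrC [(q ^ i + q ^ m)%N]addnC.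
  by [].
have suppf : Supp (fpoly m c).
  apply: supp_sum => i _; apply: supp_scale; apply: supp_sum => t _; exact: supp_X.
have f0 : (fpoly m c).[0] = 0.
  rewrite horner_coef0; apply/eqP; apply/negPn/negP => /suppf [i [j]].
  have := expn_gt0 q i; have := expn_gt0 q j; rewrite (ltnW q1) /q /=; lia.
exists (fpoly m c); split.
  have [n mE] : exists n, m = n.+1 by exists m.-1; lia.
  subst m; split => //.
    rewrite fpoly_split // monicE lead_coefDl ?lead_coefXn // size_polyXn ltnS.
    exact: fpoly_rest_size.
  rewrite fpoly_split // size_polyDl ?size_polyXn; last by rewrite ltnS; exact: fpoly_rest_size.
  rewrite /= mulnDr muln1 -expnD [(n + n.+1)%N]addnC addnC //.
move=> g _ _ eqg g0.
have E : (g - fpoly m c) ^+ q = g - fpoly m c.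
  rewrite frobD frobN; apply/eqP; rewrite -subr_eq0.
  have -> : g ^+ q + - fpoly m c ^+ q - (g - fpoly m c) =
     (g ^+ q - g) - (fpoly m c ^+ q - fpoly m c) by ring.
  by rewrite eqg eqf subrr.
have S : leq (size (g - fpoly m c)) 1.
  have := @poly.size_exp F (g - fpoly m c) q; rewrite E.
  move: q1; move: (size _) => s; move: (q) => r; nia.
apply/eqP; rewrite -subr_eq0; apply/eqP.
rewrite (size1_polyC S) -horner_coef0 hornerD hornerN g0 f0 subrr //.
Qed.
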